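(* Every $\pi\in D_n$ has a unique expression $\pi = w_{1}^{j_{1}} t_{2}^{i_{2}} w_{2}^{j_{2}} t_{3}^{i_{3}} \cdots w_{n-1}^{j_{n-1}} t_{n}^{i_{n}}$ with $0\le i_k\le k-1$, $0\le j_k\le 1$. Then: (1) The set $S^{\circ}_n$ of elements with $j_k=0$ for all $1\le k\le n-1$ is a subgroup of $D_n$ isomorphic to $S_n$; it is the parabolic subgroup generated by $s_1,\dots,s_{n-1}$, and it consists exactly of those $\pi$ whose expression above coincides with the standard OGS canonical form $t_2^{i_2}\cdots t_n^{i_n}$ of $\Phi(\pi)$ in $S_n$ (i.e., no factor $w_k$ with nonzero exponent occurs). (2) The set $Id^{\bullet}_n$ of elements with $i_k=0$ for all $2\le k\le n$ is a subgroup of $D_n$ isomorphic to $\mathbb{Z}_2^{\,n-1}$, and it consists exactly of the elements $\pi\in D_n$ with $\Phi(\pi)=1$.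
   Context: $D_n$ ($n\ge 2$) is the Coxeter group with generators $s_{1'},s_1,\dots,s_{n-1}$ and relations $s^2=1$, $(s_i s_{i+1})^3=1$, $(s_is_j)^2=1$ for $|i-j|\ge 2$, $(s_{1'}s_2)^3=1$, $(s_{1'}s_i)^2=1$ for $i\ne 2$. For $2\le k\le n$, $t_k=s_1s_2\cdots s_{k-1}$; for $1\le k\le n-1$, $w_k=s_k s_{k-1}\cdots s_2 s_1 s_{1'} s_2\cdots s_k$. $\Phi:D_n\to S_n$ is the homomorphism with $\Phi(s_{1'})=s_1$, $\Phi(s_i)=s_i$, where $S_n$ has Coxeter generators $s_i=(i,i+1)$. In $S_n$, with $t_k=s_1\cdots s_{k-1}$, every element has a unique standard OGS canonical form $t_2^{i_2}t_3^{i_3}\cdots t_n^{i_n}$ with $0\le i_k<k$. *)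

(* Defs.v *)
(* D_n is realised concretely as the group of signed
   permutations of {1..n} generated by the Coxeter generators s_1',s_1..s_{n-1}
   (its standard faithful reflection representation). *)
From mathcomp Require Import all_boot all_order all_algebra all_fingroup.
Set Implicit Arguments. Unset Strict Implicit. Unset Printing Implicit Defensive.


Definition liftf (T : Type) (U : Type) (emb : T -> U) (pinv : U -> option T)
  (g : U -> U) (x : T) : T :=
  if pinv (g (emb x)) is Some y then y else x.

Lemma liftfK (T : Type) (U : Type) (emb : T -> U) (pinv : U -> option T)
  (g : U -> U) :
  pcancel emb pinv -> (forall u x, pinv u = Some x -> emb x = u) ->
  involutive g -> involutive (liftf emb pinv g).
Proof.
move=> H1 H2 gK x; rewrite /liftf; case E: (pinv (g (emb x))) => [y|]; last by rewrite E.
by rewrite (H2 _ _ E) gK H1.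
Qed.

(* the transposition i-1 <-> i of nat (0-indexed: s_i swaps points i-1, i) *)
Definition sw (i k : nat) : nat :=
  if k == i.-1 then i else if k == i then i.-1 else k.

Lemma swK i : involutive (sw i).
Proof.
move=> k; rewrite /sw; case: i => [|i] /=.
  by case: (k =P 0) => [->|] //= /eqP /negbTE ->; rewrite ?eqxx //.
case: (k =P i) => [->|/eqP ki]; first by rewrite eqxx /= ifN // neq_ltn ltnSn orbT.
case: (k =P i.+1) => [->|/eqP ki1]; first by rewrite eqxx.
by rewrite (negbTE ki) (negbTE ki1).
Qed.

Lemma ordK n : forall u (x : 'I_n), insub u = Some x -> val x = u.
Proof. by move=> u x; case: insubP => // y _ <- [<-]. Qed.

Definition sS (n i : nat) : {perm 'I_n} :=
  perm (can_inj (liftfK (@valK _ _ _) (@ordK n) (swK i))).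

Definition tS (n k : nat) : {perm 'I_n} := (\prod_(1 <= i < k) sS n i)%g.

Definition ogs (n : nat) (f : {ffun 'I_n.+1 -> 'I_n.+1}) : {perm 'I_n} :=
  (\prod_(2 <= k < n.+1) tS n k ^+ f (inord k))%g.

Definition sembed n (x : 'I_n * bool) : nat * bool := (val x.1, x.2).
Definition spinv n (u : nat * bool) : option ('I_n * bool) :=
  omap (fun k => (k, u.2)) (insub u.1).

Lemma sembedK n : pcancel (@sembed n) (@spinv n).
Proof. by case=> k b; rewrite /spinv /sembed /= valK. Qed.

Lemma spinvK n : forall u x, @spinv n u = Some x -> sembed x = u.
Proof.
case=> k b [x c]; rewrite /spinv /=; case E: (insub k) => [y|] //= [<- <-].
by rewrite /sembed /= (ordK E).
Qed.

(* s_i (1 <= i <= n-1): swaps +-i and +-(i+1) (0-indexed points i-1, i) *)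
Definition gs (i : nat) (u : nat * bool) : nat * bool := (sw i u.1, u.2).
(* s_1': i -> -(i+1), i+1 -> -i for i = 1 (0-indexed points 0, 1) *)
Definition gs1' (u : nat * bool) : nat * bool :=
  (sw 1 u.1, if u.1 < 2 then ~~ u.2 else u.2).

Lemma gsK i : involutive (gs i).
Proof. by case=> k b; rewrite /gs /= swK. Qed.

Lemma gs1'K : involutive gs1'.
Proof.
case=> k b; rewrite /gs1' /= swK; congr pair.
have -> : (sw 1 k < 2) = (k < 2).
  by rewrite /sw /=; case: (k =P 0) => [->|] //; case: (k =P 1) => [->|] //.
by case: (k < 2) => //; rewrite negbK.
Qed.

Definition sD (n i : nat) : {perm 'I_n * bool} :=
  perm (can_inj (liftfK (@sembedK n) (@spinvK n) (gsK i))).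
Definition sD1' (n : nat) : {perm 'I_n * bool} :=
  perm (can_inj (liftfK (@sembedK n) (@spinvK n) gs1'K)).

Definition Dn (n : nat) : {set {perm 'I_n * bool}} :=
  <<sD1' n |: [set sD n (val k) | k in [pred k : 'I_n | 0 < val k]]>>%g.

Definition tD (n k : nat) : {perm 'I_n * bool} := (\prod_(1 <= i < k) sD n i)%g.
Definition wD (n k : nat) : {perm 'I_n * bool} :=
  ((\prod_(i <- rev (iota 1 k)) sD n i) * sD1' n * \prod_(2 <= i < k.+1) sD n i)%g.

(* exponent data: e.1 k = i_k (k = 2..n), e.2 k = j_k (k = 1..n-1), indices
   in 'I_n.+1 = {0..n}; unused indices are required to be 0 *)
Definition expo (n : nat) := ({ffun 'I_n.+1 -> 'I_n.+1} * {ffun 'I_n.+1 -> 'I_2})%type.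

Definition valid_expo (n : nat) (e : expo n) : bool :=
  [forall k : 'I_n.+1,
     (val (e.1 k) < maxn 1 (val k)) && (val (e.2 k) <= (0 < val k < n))].

Definition dword (n : nat) (e : expo n) : {perm 'I_n * bool} :=
  (\prod_(1 <= k < n) (wD n k ^+ val (e.2 (inord k)) * tD n k.+1 ^+ val (e.1 (inord k.+1))))%g.

(* Phi : D_n -> S_n, s_1' |-> s_1, s_i |-> s_i : forgetting the signs *)
Definition Phi (n : nat) (p : {perm 'I_n * bool}) : {perm 'I_n} :=
  odflt 1%g [pick q : {perm 'I_n} | [forall k, q k == (p (k, false)).1]].

Definition Scirc (n : nat) : {set {perm 'I_n * bool}} :=
  [set dword e | e in [pred e : expo n | valid_expo e && [forall k, val (e.2 k) == 0]]].
Definition Idbul (n : nat) : {set {perm 'I_n * bool}} :=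
  [set dword e | e in [pred e : expo n | valid_expo e && [forall k, val (e.1 k) == 0]]].

Definition Z2pow (m : nat) := 'rV['Z_2]_m.

(* Main.v *)
Require Import Defs.
From mathcomp Require Import all_boot all_order all_algebra all_fingroup.
From mathcomp Require Import zify.
Set Implicit Arguments. Unset Strict Implicit. Unset Printing Implicit Defensive.

Definition acts n (p : {perm 'I_n * bool}) (g : nat -> bool -> nat * bool) :=
  forall x b, sembed (p (x, b)) = g (nat_of_ord x) b.

Lemma sembed_inj n : injective (@sembed n).
Proof. exact: pcan_inj (@sembedK n). Qed.

Lemma acts_mul n (p q : {perm 'I_n * bool}) g1 g2 :
  acts p g1 -> acts q g2 -> acts (p * q)%g (fun x b => g2 (g1 x b).1 (g1 x b).2).
Proof.
move=> H1 H2 x b; rewrite permM -H1.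
by case E: (p (x, b)) => [y c] /=; rewrite H2.
Qed.

Lemma acts_one n : acts (1%g : {perm 'I_n * bool}) (fun x b => (x, b)).
Proof. by move=> x b; rewrite perm1. Qed.

Lemma acts_ext n (p : {perm 'I_n * bool}) g g' :
  (forall x b, x < n -> g x b = g' x b) -> acts p g -> acts p g'.
Proof. move=> E H x b. rewrite H. apply: E. exact: ltn_ord. Qed.

Lemma sw_lt i k n : i < n -> k < n -> sw i k < n.
Proof. move=> H1 H2; rewrite /sw; case: eqP => _; first by []. case: eqP => _ //; lia. Qed.

Lemma acts_sD n i : i < n -> acts (sD n i) (fun x b => (sw i x, b)).
Proof.
move=> lin x b; rewrite /sD permE /liftf /= /spinv /=.
by rewrite insubT ?sw_lt //.
Qed.

Lemma acts_sD1' n : 1 < n ->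
  acts (sD1' n) (fun x b => (sw 1 x, if x < 2 then ~~ b else b)).
Proof.
move=> lin x b; rewrite /sD1' permE /liftf /= /spinv /=.
by rewrite insubT ?sw_lt //.
Qed.

Ltac desif := repeat match goal with
 | |- context[if ?c then _ else _] =>
     match c with
     | context[if _ then _ else _] => fail 1
     | true => fail 1 | false => fail 1
     | _ => case: (boolP c) => ?; rewrite /=
     end
 end.

Ltac fin := rewrite ?addbT ?addbF ?addbN ?addNb ?negbK //;
  solve [ by [] | exfalso; lia | congr pair; lia | congr pair; by [] ].

Definition tc k x := if x == 0 then k.-1 else if x < k then x.-1 else x.

Lemma acts_tD n k : k <= n -> acts (tD n k) (fun x b => (tc k x, b)).
Proof.
elim: k => [|k IH] lkn.
  rewrite /tD big_geq //; apply: acts_ext (@acts_one n) => x b _; rewrite /tc; case: (x =P 0) => [->|] //=; by case: x.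
case: k IH lkn => [|k] IH lkn.
  rewrite /tD big_geq //; apply: acts_ext (@acts_one n) => x b _; rewrite /tc.
  by case: eqP => [->|] //=; case: x.
rewrite /tD big_nat_recr //=.
apply: acts_ext (acts_mul (IH (ltnW lkn)) (acts_sD lkn)) => x b xn /=.
congr pair; rewrite /tc /sw /=.
by desif; lia.
Qed.

Lemma wD_rec n k : 0 < k ->
  wD n k.+1 = (sD n k.+1 * wD n k * sD n k.+1)%g.
Proof.
move=> k0; rewrite /wD.
have -> : iota 1 k.+1 = rcons (iota 1 k) k.+1.
  by rewrite -cats1 -[k.+1]addn1 iotaD addnC.
by rewrite rev_rcons big_cons big_nat_recr //= !mulgA.
Qed.

Lemma acts_wD n k : 0 < k < n ->
  acts (wD n k) (fun x b => (x, b (+) ((x == 0) || (x == k)))).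
Proof.
elim: k => [|k IH] /andP [k0 kn] //.
case: k IH k0 kn => [|k] IH _ kn.
  rewrite /wD big_geq // mulg1 (_ : rev (iota 1 1) = [:: 1]) // big_seq1.
  apply: acts_ext (acts_mul (acts_sD kn) (acts_sD1' kn)) => x b xn /=.
  by rewrite /sw /=; desif; fin.
rewrite wD_rec //.
have IH' := IH (ltnW kn).
apply: acts_ext (acts_mul (acts_mul (acts_sD kn) IH') (acts_sD kn)) => x b xn /=.
by rewrite /sw /=; desif; fin.
Qed.

Import GroupScope.

Definition pos n (p : {perm 'I_n * bool}) k := (p (k, false)).1.
Definition sgn n (p : {perm 'I_n * bool}) k := (p (k, false)).2.
Definition signed n (p : {perm 'I_n * bool}) :=
  [forall k, forall b, p (k, b) == (pos p k, b (+) sgn p k)].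
Definition par n (p : {perm 'I_n * bool}) := \big[addb/false]_(k : 'I_n) sgn p k.
Definition Wn n := [set p : {perm 'I_n * bool} | signed p && ~~ par p].

Lemma signedP n (p : {perm 'I_n * bool}) k b :
  signed p -> p (k, b) = (pos p k, b (+) sgn p k).
Proof. by move=> /forallP /(_ k) /forallP /(_ b) /eqP. Qed.

Lemma signed1 n : signed (1 : {perm 'I_n * bool}).
Proof. by apply/forallP => k; apply/forallP => b; rewrite /pos /sgn !perm1 addbF. Qed.

Lemma pos_mul n (p q : {perm 'I_n * bool}) k :
  signed q -> pos (p * q) k = pos q (pos p k).
Proof.
move=> sq; rewrite /pos permM.
by case E: (p (k, false)) => [y c] /=; rewrite signedP.
Qed.

Lemma sgn_mul n (p q : {perm 'I_n * bool}) k :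
  signed q -> sgn (p * q) k = sgn p k (+) sgn q (pos p k).
Proof.
move=> sq; rewrite /sgn /pos permM.
by case E: (p (k, false)) => [y c] /=; rewrite signedP.
Qed.

Lemma signed_mul n (p q : {perm 'I_n * bool}) :
  signed p -> signed q -> signed (p * q).
Proof.
move=> sp sq; apply/forallP => k; apply/forallP => b.
rewrite pos_mul // sgn_mul // permM (signedP _ _ sp) (signedP _ _ sq).
by rewrite addbA.
Qed.

Lemma pos_inj n (p : {perm 'I_n * bool}) : signed p -> injective (pos p).
Proof.
move=> sp k k' E.
have: p (k, false) = p (k', sgn p k (+) sgn p k').
  rewrite !signedP // E; congr pair.
  by rewrite -addbA addbb addbF.
by move/perm_inj => [].
Qed.

Lemma par_mul n (p q : {perm 'I_n * bool}) :
  signed p -> signed q -> par (p * q) = par p (+) par q.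
Proof.
move=> sp sq; rewrite /par.
rewrite (eq_bigr (fun k => sgn p k (+) sgn q (pos p k))); last by move=> k _; rewrite sgn_mul.
rewrite big_split /=; congr addb.
by rewrite [RHS](reindex_inj (pos_inj sp)).
Qed.

Lemma Wn_group_set n : group_set (Wn n).
Proof.
apply/group_setP; split.
  rewrite inE signed1 /= /par big1 // => k _; by rewrite /sgn perm1.
move=> p q; rewrite !inE => /andP [sp pp] /andP [sq pq].
by rewrite signed_mul //= par_mul // (negbTE pp) (negbTE pq).
Qed.

Canonical Wn_group n := Group (Wn_group_set n).

Lemma acts_signed n (p : {perm 'I_n * bool}) h s :
  acts p (fun x b => (h x, b (+) s x)) ->
  [/\ signed p, forall k, nat_of_ord (pos p k) = h (nat_of_ord k) & forall k, sgn p k = s (nat_of_ord k)].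
Proof.
move=> H.
have Hp : forall k, nat_of_ord (pos p k) = h (nat_of_ord k) by move=> k; have := H k false; rewrite /pos; case: (p _) => y c [].
have Hs : forall k, sgn p k = s (nat_of_ord k) by move=> k; have := H k false; rewrite /sgn; case: (p _) => y c [].
split=> //; apply/forallP => k; apply/forallP => b; apply/eqP.
apply: (@sembed_inj n); rewrite H /sembed /= Hs; congr pair.
by rewrite Hp.
Qed.

Lemma sD_Wn n i : 0 < i < n -> sD n i \in Wn n.
Proof.
case/andP=> i0 iN.
have /acts_signed [sp _ Hs] : acts (sD n i) (fun x b => (sw i x, b (+) (fun _ => false) x)).
  by apply: acts_ext (acts_sD iN) => x b _; rewrite addbF.
by rewrite inE sp /= /par big1 // => k _; rewrite Hs.
Qed.

Lemma sD1'_Wn n : 1 < n -> sD1' n \in Wn n.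
Proof.
move=> n2.
have /acts_signed [sp _ Hs] : acts (sD1' n) (fun x b => (sw 1 x, b (+) (x < 2))).
  apply: acts_ext (acts_sD1' n2) => x b _; congr pair.
  by case: (x < 2); rewrite ?addbT ?addbF.
rewrite inE sp /= /par.
case: n n2 sp Hs => [|[|n]] // _ sp Hs.
by rewrite big_ord_recl big_ord_recl big1 ?Hs //= => k _; rewrite Hs.
Qed.

Lemma Dn_sub_Wn n : 1 < n -> Dn n \subset Wn n.
Proof.
move=> n2; rewrite /Dn gen_subG; apply/subsetP => x; rewrite in_setU1.
case/orP => [/eqP -> | /imsetP [k Hk ->]]; first exact: sD1'_Wn.
by apply: sD_Wn; rewrite inE in Hk; rewrite Hk ltn_ord.
Qed.

Import GroupScope.

Definition Un n := [set p : {perm 'I_n * bool} | signed p && [forall k, ~~ sgn p k]].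
Definition Pn n := [set p : {perm 'I_n * bool} | signed p && [forall k, pos p k == k]].

Lemma Un_group_set n : group_set (Un n).
Proof.
apply/group_setP; split.
  by rewrite inE signed1 /=; apply/forallP => k; rewrite /sgn perm1.
move=> p q; rewrite !inE => /andP [sp /forallP pp] /andP [sq /forallP pq].
rewrite signed_mul //=; apply/forallP => k; rewrite sgn_mul //.
by rewrite (negbTE (pp k)) (negbTE (pq _)).
Qed.
Canonical Un_group n := Group (Un_group_set n).

Lemma Pn_group_set n : group_set (Pn n).
Proof.
apply/group_setP; split.
  by rewrite inE signed1 /=; apply/forallP => k; rewrite /pos perm1.
move=> p q; rewrite !inE => /andP [sp /forallP pp] /andP [sq /forallP pq].
rewrite signed_mul //=; apply/forallP => k; rewrite pos_mul //.
by rewrite (eqP (pp k)) (eqP (pq _)).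
Qed.
Canonical Pn_group n := Group (Pn_group_set n).

Lemma Un_sub_Wn n : Un n \subset Wn n.
Proof.
apply/subsetP => p; rewrite !inE => /andP [-> /forallP H] /=.
by rewrite /par big1 // => k _; rewrite (negbTE (H k)).
Qed.

Lemma sD_Un n i : i < n -> sD n i \in Un n.
Proof.
move=> iN.
have /acts_signed [sp _ Hs] : acts (sD n i) (fun x b => (sw i x, b (+) (fun _ => false) x)).
  by apply: acts_ext (acts_sD iN) => x b _; rewrite addbF.
by rewrite inE sp /=; apply/forallP => k; rewrite Hs.
Qed.

Lemma tD_Un n k : k <= n -> tD n k \in Un n.
Proof.
move=> kn; rewrite /tD; rewrite big_seq; apply: group_prod => i; rewrite mem_index_iota => /andP [_ ik].
apply: sD_Un; lia.
Qed.

Lemma wD_Pn n k : 0 < k < n -> wD n k \in Pn n.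
Proof.
move=> kn.
have /acts_signed [sp Hp _] : acts (wD n k) (fun x b => (id x, b (+) ((x == 0) || (x == k)))).
  exact: acts_wD.
by rewrite inE sp /=; apply/forallP => x; apply/eqP/ord_inj; rewrite Hp.
Qed.

Lemma sD_Dn n i : 0 < i < n -> sD n i \in Dn n.
Proof.
case/andP => i0 iN; rewrite /Dn; apply: mem_gen; apply/setU1P; right.
by apply/imsetP; exists (Ordinal iN).
Qed.

Lemma sD1'_Dn n : sD1' n \in Dn n.
Proof. by rewrite /Dn; apply: mem_gen; apply/setU1P; left. Qed.

Lemma tD_Dn n k : k <= n -> tD n k \in Dn n.
Proof.
move=> kn; rewrite /tD big_seq; apply: group_prod => i; rewrite mem_index_iota => /andP [i0 ik].
apply: sD_Dn; lia.
Qed.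

Lemma wD_Dn n k : k < n -> wD n k \in Dn n.
Proof.
move=> kn; rewrite /wD; rewrite !groupM ?sD1'_Dn //.
  rewrite big_seq; apply: group_prod => i; rewrite mem_rev mem_iota => H.
  apply: sD_Dn; lia.
rewrite big_seq; apply: group_prod => i; rewrite mem_index_iota => /andP [i0 ik]; apply: sD_Dn; lia.
Qed.

Definition Q n (i j : nat -> nat) m :=
  \prod_(1 <= k < m) (wD n k ^+ j k * tD n k.+1 ^+ i k.+1).

Lemma Q_Dn n i j m : m <= n -> Q n i j m \in Dn n.
Proof.
move=> mn; rewrite /Q big_seq; apply: group_prod => k; rewrite mem_index_iota => /andP [k0 km].
by rewrite groupM ?groupX ?wD_Dn ?tD_Dn //; lia.
Qed.

Definition fixg n m (p : {perm 'I_n * bool}) := forall x b, m <= nat_of_ord x -> p (x, b) = (x, b).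

Lemma fixg1 n m : fixg m (1 : {perm 'I_n * bool}).
Proof. by move=> x b _; rewrite perm1. Qed.

Lemma fixgM n m (p q : {perm 'I_n * bool}) : fixg m p -> fixg m q -> fixg m (p * q).
Proof. by move=> Hp Hq x b H; rewrite permM Hp // Hq. Qed.

Lemma fixgX n m (p : {perm 'I_n * bool}) e : fixg m p -> fixg m (p ^+ e).
Proof. by move=> Hp; elim: e => [|e IH]; [exact: fixg1 | rewrite expgS; exact: fixgM]. Qed.

Lemma fixgV n m (p : {perm 'I_n * bool}) : fixg m p -> fixg m p^-1.
Proof. by move=> Hp x b H; rewrite -{1}(Hp x b H) permK. Qed.

Lemma fixg_le n m m' (p : {perm 'I_n * bool}) : m <= m' -> fixg m p -> fixg m' p.
Proof. by move=> le Hp x b H; apply: Hp; apply: leq_trans H. Qed.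

Lemma acts_eval n (p : {perm 'I_n * bool}) g x b y c :
  acts p g -> g (nat_of_ord x) b = (nat_of_ord y, c) -> p (x, b) = (y, c).
Proof. by move=> H E; apply: (@sembed_inj n); rewrite H E. Qed.

Lemma fixg_tD n k : k <= n -> fixg k (tD n k).
Proof.
move=> kn x b H; apply: acts_eval (acts_tD kn) _.
rewrite /tc; desif; fin.
Qed.

Lemma fixg_wD n k : 0 < k < n -> fixg k.+1 (wD n k).
Proof.
move=> kn x b H; apply: acts_eval (acts_wD kn) _.
desif; fin.
Qed.

Lemma fixg_Q n i j m : m <= n -> fixg m (Q n i j m).
Proof.
move=> mn; rewrite /Q big_seq; elim/big_ind: _ => //; first exact: fixg1.
  by move=> p q; apply: fixgM.
move=> k; rewrite mem_index_iota => /andP [k0 km]; apply: fixgM; apply: fixgX.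
  apply: fixg_le (fixg_wD _) => //; lia.
apply: fixg_le (fixg_tD _) => //; lia.
Qed.

Lemma tD_pow n m i (x : 'I_n) c : nat_of_ord x = m -> i <= m ->
  sembed ((tD n m.+1 ^+ i) (x, c)) = (m - i, c).
Proof.
move=> xm; elim: i => [|i IH] im.
  by rewrite expg0 perm1 /sembed /= xm subn0.
have mn : m < n by rewrite -xm.
rewrite expgSr permM.
case E: ((tD n m.+1 ^+ i) (x, c)) => [z d].
have := IH (ltnW im); rewrite E => -[zi ->].
rewrite (acts_tD mn) /tc /= zi.
desif; fin.
Qed.

Lemma wD_pow n m j (x : 'I_n) : nat_of_ord x = m -> 0 < m -> j <= 1 ->
  (wD n m ^+ j) (x, false) = (x, j == 1%N).
Proof.
move=> xm m0; case: j => [|[|j]] // _; first by rewrite expg0 perm1.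
have mn : 0 < m < n by rewrite m0 -xm ltn_ord.
rewrite expg1; apply: acts_eval (acts_wD mn) _.
by rewrite xm eqxx orbT.
Qed.

Import GroupScope.

Lemma Q_rec n i j m : 0 < m ->
  Q n i j m.+1 = Q n i j m * (wD n m ^+ j m * tD n m.+1 ^+ i m.+1).
Proof. by move=> m0; rewrite /Q big_nat_recr. Qed.

Lemma Q1 n i j : Q n i j 1 = 1.
Proof. by rewrite /Q big_geq. Qed.

Lemma base_one n (p : {perm 'I_n * bool}) : p \in Wn n -> fixg 1 p -> p = 1.
Proof.
rewrite inE => /andP [sp pp] pf.
apply/permP => -[x b]; rewrite perm1.
case: (posnP x) => [x0 | xpos]; last by apply: pf.
have px : pos p x = x.
  apply: ord_inj; rewrite x0; case: (posnP (pos p x)) => [// | ypos].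
  have : pos p (pos p x) = pos p x by rewrite /pos (pf _ _ ypos).
  move/(pos_inj sp) => E; move: ypos; rewrite E x0 //.
have sx : sgn p x = false.
  move: pp; rewrite /par (bigD1 x) //= big1 ?addbF; first by move/negbTE.
  move=> k kx; rewrite /sgn pf //.
  case: (posnP k) => // k0; case/eqP: kx; apply: ord_inj; by rewrite k0 x0.
by rewrite signedP // px sx addbF.
Qed.

Lemma exist_Q n m (p : {perm 'I_n * bool}) : 1 < n -> 0 < m <= n ->
  p \in Wn n -> fixg m p ->
  exists i j, [/\ p = Q n i j m,
    (forall k, 0 < k < m -> i k.+1 <= k /\ j k <= 1),
    (p \in Un n -> forall k, j k = 0) &
    (p \in Pn n -> forall k, i k = 0)].
Proof.
move=> n2; elim: m p => [|m IH] p /andP [m0 mn] pW pf //.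
case: (posnP m) => [mz | M0].
  subst m; exists (fun _ => 0), (fun _ => 0); rewrite Q1 (base_one pW pf); split=> //.
have Mn : m < n by [].
pose M := m.
pose xM : 'I_n := Ordinal Mn.
have spW : signed p by move: pW; rewrite inE => /andP [].
pose y := pos p xM; pose c := sgn p xM.
have yM : nat_of_ord y <= M.
  rewrite leqNgt; apply/negP => My.
  have : pos p y = pos p xM by rewrite /pos (pf _ _ My).
  move/(pos_inj spW) => E; move: My; rewrite E /=; lia.
pose i0 := M - y; pose j0 := nat_of_bool c.
pose t := tD n M.+1; pose w := wD n M.
have tW : t \in Wn n by apply: (subsetP (Un_sub_Wn n)); apply: tD_Un.
have wW : w \in Wn n by apply: (subsetP (Dn_sub_Wn n2)); apply: wD_Dn.
pose q := p * (t ^+ i0)^-1 * (w ^+ j0)^-1.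
have qW : q \in Wn n by rewrite !groupM ?groupV ?groupX.
have sqW : signed q by move: qW; rewrite inE => /andP [].
have Ep : p (xM, false) = (y, c) by rewrite /y /c /pos /sgn; case: (p _).
have Et : (t ^+ i0) (xM, c) = (y, c).
  apply: (@sembed_inj n); rewrite tD_pow //; last by rewrite /i0; lia.
  rewrite /sembed /= /i0; congr pair; lia.
have Ew : (w ^+ j0) (xM, false) = (xM, c).
  by rewrite wD_pow // /j0; case: (c).
have qM : q (xM, false) = (xM, false).
  by rewrite !permM Ep -Et permK -Ew permK.
have qf1 : fixg M.+1 q.
  rewrite /q; apply: fixgM.
    apply: fixgM; first exact: pf.
    apply: fixgV; apply: fixgX; apply: fixg_tD; exact: Mn.
  apply: fixgV; apply: fixgX; apply: fixg_wD; by rewrite M0.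
have qf : fixg M q.
  move=> x b Mx; case: (ltngtP M x) => [Mx' | xM' | Mxe].
  - exact: qf1.
  - exfalso; lia.
  have -> : x = xM by apply: ord_inj.
  rewrite signedP //.
  have -> : pos q xM = xM by rewrite /pos qM.
  have -> : sgn q xM = false by rewrite /sgn qM.
  by rewrite addbF.
have mn0 : 0 < m <= n by rewrite M0 ltnW.
have [i [j [qQ bnd fU fP]]] := IH q mn0 qW qf.
exists (fun k => if k == M.+1 then i0 else i k), (fun k => if k == M then j0 else j k).
split.
- rewrite Q_rec // eqxx eqxx.
  have -> : Q n (fun k => if k == M.+1 then i0 else i k)
               (fun k => if k == M then j0 else j k) M = Q n i j M.
    rewrite /Q; apply: eq_big_nat => k /andP [k1 kM].
    rewrite ifN; last by apply/eqP; lia.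
    rewrite ifN //; apply/eqP; lia.
  by rewrite -qQ /q !mulgA mulgKV mulgKV.
- move=> k /andP [k0 kM]; case: (k =P M) => [-> | kM'].
    rewrite ?eqxx; split; [rewrite /i0; lia | by rewrite /j0; case: (c)].
  have h1 : (k.+1 == M.+1) = false by apply/eqP; lia.
  have h2 : (k == M) = false by apply/eqP.
  rewrite h1 ?h2.
  apply: bnd; lia.
- move=> pU k.
  have c0 : c = false.
    by move: pU; rewrite inE => /andP [_ /forallP /(_ xM) /negbTE].
  have qU : q \in Un n.
    rewrite /q /j0 c0 expg0 invg1 mulg1 groupM ?groupV ?groupX //.
    exact: tD_Un.
  by rewrite (fU qU) /j0 c0; case: ifP.
- move=> pP k.
  have y0 : y = xM.
    by move: pP; rewrite inE => /andP [_ /forallP /(_ xM) /eqP].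
  have i00 : i0 = 0 by rewrite /i0 y0 /= subnn.
  have qP : q \in Pn n.
    rewrite /q i00 expg0 invg1 mulg1 groupM ?groupV ?groupX //.
    by apply: wD_Pn; rewrite M0.
  by rewrite (fP qP) i00; case: ifP.
Qed.

Lemma inj_Q n i j i' j' m : m <= n ->
  (forall k, 0 < k < m -> i k.+1 <= k /\ j k <= 1) ->
  (forall k, 0 < k < m -> i' k.+1 <= k /\ j' k <= 1) ->
  Q n i j m = Q n i' j' m ->
  forall k, 0 < k < m -> i k.+1 = i' k.+1 /\ j k = j' k.
Proof.
elim: m => [|m IH] mn B B' E k /andP [k0 km] //.
case: (posnP m) => [mz | M0]; first lia.
have Mn : m < n by [].
pose M := m.
pose xM : 'I_n := Ordinal Mn.
have [iM jM] : i M.+1 <= M /\ j M <= 1 by apply: B; rewrite M0 ltnSn.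
have [iM' jM'] : i' M.+1 <= M /\ j' M <= 1 by apply: B'; rewrite M0 ltnSn.
have ev : forall i j, i M.+1 <= M -> j M <= 1 ->
    sembed (Q n i j M.+1 (xM, false)) = (M - i M.+1, j M == 1%N).
  move=> i1 j1 h1 h2; rewrite Q_rec // !permM fixg_Q ?(ltnW Mn) //.
  by rewrite wD_pow // tD_pow.
have := ev i j iM jM; rewrite E ev // => -[Hi Hj].
have Ei : i M.+1 = i' M.+1 by lia.
have Ej : j M = j' M.
  by move: Hj jM jM'; case: (j M) => [|[|]]; case: (j' M) => [|[|]].
have EQ : Q n i j M = Q n i' j' M.
  by move: E; rewrite !Q_rec // Ei Ej => /mulIg.
case: (k =P M) => [-> // | kM].
have kM2 : 0 < k < m by apply/andP; split=> //; lia.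
apply: (IH (ltnW mn) _ _ EQ k kM2).
- move=> k' /andP [h1 h2]; apply: B; apply/andP; split=> //; lia.
- move=> k' /andP [h1 h2]; apply: B'; apply/andP; split=> //; lia.
Qed.

Import GroupScope.

Definition bnd n (i j : nat -> nat) := forall k, 0 < k < n -> i k.+1 <= k /\ j k <= 1.

Definition toE n (i j : nat -> nat) : expo n :=
  ([ffun k : 'I_n.+1 => inord (if 1 < k then i k else 0)],
   [ffun k : 'I_n.+1 => inord (if 0 < k < n then j k else 0)]).

Definition ie n (e : expo n) k := nat_of_ord (e.1 (inord k)).
Definition je n (e : expo n) k := nat_of_ord (e.2 (inord k)).

Lemma dwordQ n (e : expo n) : dword e = Q n (ie e) (je e) n.
Proof. by []. Qed.

Lemma valid_bnd n (e : expo n) : valid_expo e -> bnd n (ie e) (je e).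
Proof.
move=> /forallP V k /andP [k0 kn]; rewrite /ie /je.
have /andP [h1 _] := V (inord k.+1).
have /andP [_ h2] := V (inord k).
move: h1 h2 => /= h1 h2; move: h1 h2; rewrite !inordK; lia.
Qed.

Lemma toE_valid n i j : bnd n i j -> valid_expo (toE n i j).
Proof.
move=> B; apply/forallP => k; rewrite !ffunE /=.
have kn := ltn_ord k.
apply/andP; split.
  case: (ltnP 1 k) => k1.
    have [h _] : i k.-1.+1 <= k.-1 /\ j k.-1 <= 1 by apply: B; apply/andP; split; lia.
    rewrite (_ : k.-1.+1 = k) in h; last lia.
    rewrite inordK; lia.
  rewrite inordK; lia.
case: (boolP (0 < k < n)) => kk.
  have [_ h] := B k kk; rewrite inordK /=; lia.
rewrite inordK /=; lia.
Qed.

Lemma toE_dword n i j : bnd n i j -> dword (toE n i j) = Q n i j n.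
Proof.
move=> B; rewrite /dword /Q; apply: eq_big_nat => k /andP [k0 kn].
rewrite !ffunE !inordK; try lia.
have [h1 h2] := B k (ltac:(apply/andP; split; lia)).
rewrite (_ : 1 < k.+1) // (_ : 0 < k < n); last by apply/andP.
rewrite /= !inordK //; lia.
Qed.

Lemma expo_eq n (e e' : expo n) : valid_expo e -> valid_expo e' ->
  (forall k, 0 < k < n -> ie e k.+1 = ie e' k.+1 /\ je e k = je e' k) -> e = e'.
Proof.
case: e e' => [e1 e2] [e1' e2'] /forallP V /forallP V' H.
congr pair; apply/ffunP => k; apply: ord_inj.
  have /andP [h1 _] := V k; have /andP [h1' _] := V' k.
  case: (leqP k 1) => k1.
    move: h1 h1'; rewrite /= (_ : maxn 1 k = 1%N); last lia.
    lia.
  have kn := ltn_ord k.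
  have := H k.-1 (ltac:(apply/andP; split; lia)); rewrite /ie /= => -[+ _].
  by rewrite (_ : k.-1.+1 = k) ?inord_val //; lia.
have /andP [_ h2] := V k; have /andP [_ h2'] := V' k.
case: (boolP (0 < k < n)) => kk.
  have := H k kk; rewrite /je /= => -[_].
  by rewrite inord_val.
move: h2 h2'; rewrite /= (negbTE kk); lia.
Qed.

Lemma Wn_Q n (p : {perm 'I_n * bool}) : 1 < n -> p \in Wn n ->
  exists i j, [/\ p = Q n i j n, bnd n i j,
    (p \in Un n -> forall k, j k = 0) &
    (p \in Pn n -> forall k, i k = 0)].
Proof.
move=> n2 pW.
have [i [j [E B fU fP]]] := @exist_Q n n p n2 (ltac:(apply/andP; split; lia)) pW
  (fun x b H => ltac:(exfalso; have := ltn_ord x; lia)).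
by exists i, j.
Qed.

Lemma Dn_eq_Wn n : 1 < n -> Dn n = Wn n.
Proof.
move=> n2; apply/eqP; rewrite eqEsubset Dn_sub_Wn //=.
apply/subsetP => p pW; have [i [j [-> _ _ _]]] := Wn_Q n2 pW.
exact: Q_Dn.
Qed.

Lemma unique_expr n (pi : {perm 'I_n * bool}) : 1 < n -> pi \in Dn n ->
  exists! e : expo n, valid_expo e /\ pi = dword e.
Proof.
move=> n2; rewrite Dn_eq_Wn // => pW.
have [i [j [E B _ _]]] := Wn_Q n2 pW.
exists (toE n i j); split.
  by split; [exact: toE_valid | rewrite toE_dword].
move=> e' [V' E'].
apply: expo_eq; [exact: toE_valid | exact: V' |].
apply: inj_Q; [exact: leqnn | exact: valid_bnd (toE_valid B) | exact: valid_bnd V' |].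
by rewrite -!dwordQ toE_dword // -E.
Qed.

Import GroupScope.

Definition fUf n (s : {perm 'I_n}) (u : 'I_n * bool) : 'I_n * bool := (s u.1, u.2).
Lemma fUf_inj n s : injective (@fUf n s).
Proof. by move=> [x b] [y c] [/perm_inj -> ->]. Qed.
Definition fU n (s : {perm 'I_n}) : {perm 'I_n * bool} := perm (@fUf_inj n s).

Lemma fUE n (s : {perm 'I_n}) x b : fU s (x, b) = (s x, b).
Proof. by rewrite permE. Qed.

Lemma fUM n : {morph (@fU n) : s t / s * t}.
Proof. by move=> s t; apply/permP => -[x b]; rewrite !permM !fUE permM. Qed.

Lemma fU1 n : fU (1 : {perm 'I_n}) = 1.
Proof. by apply/permP => -[x b]; rewrite fUE !perm1. Qed.

Lemma fUX n (s : {perm 'I_n}) e : fU (s ^+ e) = fU s ^+ e.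
Proof. by elim: e => [|e IH]; rewrite ?expg0 ?fU1 // !expgS fUM IH. Qed.

Lemma fU_sS n i : fU (sS n i) = sD n i.
Proof.
apply/permP => -[x b]; rewrite fUE /sS /sD !permE /liftf /spinv /sembed /=.
by case: insub.
Qed.

Lemma fU_tS n k : fU (tS n k) = tD n k.
Proof.
rewrite /tS /tD (big_morph (@fU n) (@fUM n) (@fU1 n)).
by apply: eq_bigr => i _; rewrite fU_sS.
Qed.

Lemma fU_inj n : injective (@fU n).
Proof.
move=> s t E; apply/permP => x.
by have := fUE s x false; rewrite E fUE => -[].
Qed.

Lemma fU_Un n s : @fU n s \in Un n.
Proof.
rewrite inE; apply/andP; split.
  by apply/forallP => k; apply/forallP => b; rewrite /pos /sgn !fUE addbF.
by apply/forallP => k; rewrite /sgn fUE.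
Qed.

Lemma Un_fU n (p : {perm 'I_n * bool}) : p \in Un n -> exists s, p = fU s.
Proof.
rewrite inE => /andP [sp /forallP H].
exists (perm (pos_inj sp)); apply/permP => -[x b].
by rewrite fUE permE signedP // (negbTE (H x)) addbF.
Qed.

Lemma Phi_pos n (p : {perm 'I_n * bool}) k : signed p -> Phi p k = pos p k.
Proof.
move=> sp; rewrite /Phi; case: pickP => [q /forallP Hq | H] /=.
  by rewrite (eqP (Hq k)).
have := H (perm (pos_inj sp)); move/negbT/forallPn => -[x].
by rewrite permE /pos eqxx.
Qed.

Lemma Phi_fU n (s : {perm 'I_n}) : Phi (fU s) = s.
Proof.
apply/permP => x; rewrite Phi_pos /pos ?fUE //.
by have := fU_Un s; rewrite inE => /andP [].
Qed.

Lemma dword_j0 n (e : expo n) : [forall k, val (e.2 k) == 0] ->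
  dword e = fU (ogs e.1).
Proof.
move=> /forallP H.
rewrite /ogs (big_morph (@fU n) (@fUM n) (@fU1 n)) big_add1 /=.
rewrite /dword; apply: eq_bigr => k _.
by rewrite (eqP (H _)) expg0 mul1g fUX fU_tS.
Qed.

Lemma Scirc_Un n : 1 < n -> Scirc n = Un n.
Proof.
move=> n2; apply/setP => p; apply/idP/idP.
  case/imsetP => e /andP [V H] ->.
  rewrite dword_j0 //; exact: fU_Un.
move=> pU.
have pW : p \in Wn n by apply: (subsetP (Un_sub_Wn n)).
have [i [j [E B fU0 _]]] := Wn_Q n2 pW.
apply/imsetP; exists (toE n i j); last by rewrite toE_dword.
rewrite inE toE_valid //=; apply/forallP => k; rewrite ffunE fU0 //.
by case: ifP => _; rewrite inordK.
Qed.

Import GroupScope.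

Lemma Idbul_eq n : 1 < n -> Idbul n = Dn n :&: Pn n.
Proof.
move=> n2; apply/setP => p; apply/idP/idP.
  case/imsetP => e /andP [V /forallP H] ->.
  rewrite inE dwordQ Q_Dn //= /Q big_seq; apply: group_prod => k.
  rewrite mem_index_iota => /andP [k0 kn].
  rewrite /ie (eqP (H _)) expg0 mulg1 groupX //; apply: wD_Pn; by rewrite k0.
rewrite inE => /andP [pD pP].
have pW : p \in Wn n by rewrite -Dn_eq_Wn.
have [i [j [E B _ fP]]] := Wn_Q n2 pW.
apply/imsetP; exists (toE n i j); last by rewrite toE_dword.
rewrite inE toE_valid //=; apply/forallP => k; rewrite ffunE fP //.
by case: ifP => _; rewrite inordK.
Qed.

Lemma Idbul_Phi n : 1 < n -> Idbul n = [set pi in Dn n | Phi pi == 1].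
Proof.
move=> n2; rewrite Idbul_eq //; apply/setP => p; rewrite !inE.
case pD: (p \in Dn n) => //=.
have : p \in Wn n by rewrite -Dn_eq_Wn.
rewrite inE => /andP [sp _]; rewrite sp /=.
apply/idP/idP.
  by move/forallP => H; apply/eqP/permP => k; rewrite Phi_pos // perm1 (eqP (H k)).
by move/eqP => H; apply/forallP => k; rewrite -Phi_pos // H perm1.
Qed.

Definition par2 N (v : 'rV['Z_2]_N) : bool := \big[addb/false]_(k < N) (v ord0 k != 0%R).
Definition flip N (v : 'rV['Z_2]_N) (x : 'I_N.+1) : bool :=
  if unlift ord0 x is Some k then v ord0 k != 0%R else par2 v.
Definition gf N (v : 'rV['Z_2]_N) (u : 'I_N.+1 * bool) : 'I_N.+1 * bool :=
  (u.1, u.2 (+) flip v u.1).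
Lemma gf_inj N v : injective (@gf N v).
Proof.
move=> [x b] [y c] [E1 E2]; subst y; congr pair.
by move: E2 => /(congr1 (addb^~ (flip v x))); rewrite -!addbA addbb !addbF.
Qed.
Definition gI N (v : 'rV['Z_2]_N) : {perm 'I_N.+1 * bool} := perm (@gf_inj N v).

Lemma z2add (a b : 'Z_2) : (a + b != 0)%R = (a != 0)%R (+) (b != 0)%R.
Proof. by move: a b; do 2!case=> [[|[|?]] ?] //. Qed.

Lemma z2eq (a b : 'Z_2) : (a != 0)%R = (b != 0)%R -> a = b.
Proof. by move: a b; do 2!case=> [[|[|?]] ?] //; move=> _; apply: val_inj. Qed.

Lemma flipD N (v w : 'rV['Z_2]_N) x : flip (v + w)%R x = flip v x (+) flip w x.
Proof.
rewrite /flip; case: unlift => [k|]; first by rewrite mxE z2add.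
rewrite /par2 -big_split /=; apply: eq_bigr => k _; by rewrite mxE z2add.
Qed.

Lemma gIM N : {morph (@gI N) : v w / v * w}.
Proof.
move=> v w; apply/permP => -[x b]; rewrite permM !permE /gf /= FinRing.zmodMgE.
by rewrite flipD addbA.
Qed.

Lemma Idbul_isog n : 1 < n -> Idbul n \isog [set: Z2pow n.-1].
Proof.
case: n => [|[|N]] // _; rewrite Idbul_eq //.
apply: isog_symr; apply/isogP.
exists (Morphism (D := [set: Z2pow N.+1]) (in2W (@gIM N.+1))).
  apply/injmP => v w _ _ /= E; apply/rowP => k.
  have := congr1 (fun p : {perm _} => p (lift ord0 k, false)) E.
  rewrite /= !permE /gf /flip /= liftK => -[]; rewrite (ord1 _).
  exact: z2eq.
rewrite morphimEdom; apply/setP => p; apply/imsetP/idP.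
  case=> v _ ->.
  have sp : signed (gI v).
    by apply/forallP => k; apply/forallP => b; rewrite /pos /sgn !permE /gf /= ?eqxx.
  have vW : gI v \in Wn N.+2.
    rewrite inE sp /=.
    rewrite /par big_ord_recl /sgn !permE /gf /= /flip unlift_none.
    rewrite (eq_bigr (fun k => v ord0 k != 0%R)); last first.
      by move=> k _; rewrite permE /gf /= /flip liftK.
    by rewrite /par2 addbb.
  have vD : gI v \in Dn N.+2 by rewrite Dn_eq_Wn.
  have vP : gI v \in Pn N.+2.
    by rewrite inE sp; apply/forallP => k; rewrite /pos permE.
  by rewrite inE; apply/andP; split.
rewrite inE => /andP [pD pP].
have : p \in Wn _ by rewrite -Dn_eq_Wn.
rewrite inE => /andP [sp pp].
move: pP; rewrite inE sp => /forallP pP.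
exists ((\row_k (if sgn p (lift ord0 k) then 1 else 0 : 'Z_2))%R) => //.
apply/permP => -[x b]; rewrite permE /gf /= signedP // (eqP (pP x)); congr pair.
congr addb; rewrite /flip.
case: (unliftP ord0 x) => [k -> | ->].
  by rewrite mxE; case: (sgn p _).
rewrite /par2 (eq_bigr (fun k => sgn p (lift ord0 k))); last first.
  by move=> k _; rewrite mxE; case: (sgn p _).
move: pp; rewrite /par big_ord_recl.
by case: (sgn p ord0); case: (\big[addb/false]_(_ < _) _).
Qed.

Close Scope group_scope.

Lemma Un_isog n : Un n \isog [set: {perm 'I_n}].
Proof.
apply: isog_symr; apply/isogP.
exists (Morphism (D := [set: {perm 'I_n}]) (in2W (@fUM n))).
  by apply/injmP => x y _ _; exact: fU_inj.
rewrite morphimEdom; apply/setP => p; apply/imsetP/idP.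
  by case=> s _ ->; exact: fU_Un.
by case/Un_fU => s ->; exists s; rewrite ?inE.
Qed.

Lemma Un_gen n : Un n = <<[set sD n (val k) | k in [pred k : 'I_n | 0 < val k]]>>%g.
Proof.
apply/eqP; rewrite eqEsubset; apply/andP; split; last first.
  rewrite gen_subG; apply/subsetP => x /imsetP [k _ ->]; apply: sD_Un; exact: ltn_ord.
case: (ltnP 1 n) => n2; last first.
  apply/subsetP => p /Un_fU [s ->].
  have -> : s = 1%g.
    apply/permP => x; apply: ord_inj; rewrite perm1.
    have := ltn_ord (s x); have := ltn_ord x; lia.
  by rewrite fU1 group1.
apply/subsetP => p; rewrite -(Scirc_Un n2) => /imsetP [e /andP [V /forallP H] ->].
rewrite /dword big_seq; apply: group_prod => k; rewrite mem_index_iota => /andP [k0 kn].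
rewrite (eqP (H _)) expg0 mul1g groupX // /tD big_seq; apply: group_prod => i.
rewrite mem_index_iota => /andP [i0 ik].
have iN : i < n by lia.
apply: mem_gen; apply/imsetP; exists (Ordinal iN) => //.
Qed.

Theorem mainTheorem6 (n : nat) (hn : 2 <= n) :
  (* unique expression  w_1^{j_1} t_2^{i_2} ... w_{n-1}^{j_{n-1}} t_n^{i_n} *)
  (forall pi, pi \in Dn n -> exists! e : expo n, valid_expo e /\ pi = dword e) /\
  (* (1) S°_n *)
  ((group_set (Scirc n) && (Scirc n \subset Dn n)) /\
   Scirc n \isog [set: {perm 'I_n}] /\
   Scirc n = <<[set sD n (val k) | k in [pred k : 'I_n | 0 < val k]]>>%g /\
   Scirc n = [set pi in Dn n |
                [exists e : expo n, [&& valid_expo e, pi == dword e,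
                                        [forall k, val (e.2 k) == 0] &
                                        Phi pi == ogs e.1]]]) /\
  (* (2) Id°_n *)
  ((group_set (Idbul n) && (Idbul n \subset Dn n)) /\
   Idbul n \isog [set: Z2pow n.-1] /\
   Idbul n = [set pi in Dn n | Phi pi == 1%g]).
Proof.
have n2 : 1 < n := hn.
split; first by move=> pi; exact: unique_expr.
split.
  split.
    rewrite Scirc_Un // Un_group_set /= Dn_eq_Wn //; exact: Un_sub_Wn.
  split; first by rewrite Scirc_Un //; exact: Un_isog.
  split; first by rewrite Scirc_Un //; exact: Un_gen.
  apply/setP => p; apply/imsetP/idP.
    case=> e /andP [V H] ->; rewrite inE dwordQ Q_Dn //=.
    apply/existsP; exists e; rewrite V eqxx H /=.
    by rewrite -dwordQ dword_j0 // Phi_fU.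
  rewrite inE => /andP [_ /existsP [e /and4P [V /eqP -> H _]]].
  by exists e => //; rewrite inE V H.
split.
  by rewrite Idbul_eq // group_setI subsetIl.
split; first exact: Idbul_isog.
exact: Idbul_Phi.
Qed.
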